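(* Let $\mathcal Z\subseteq\mathcal H$ be a subspace, let $A$ be a $\Delta$-AGSP for $\mathcal Z$ with $\Delta\le 1/2$, and set $\tilde H=I-A^\dagger A$. Let $\delta>0$ and let $\mathcal Y\subseteq\mathcal H$ be $\delta$-viable for $\mathcal Z$. Let $\tilde{\mathcal Z}\subseteq\mathcal Y$ be the support (range) of the spectral projection $\mathbf 1_{[0,\delta]}(\tilde H|_{\mathcal Y})$, regarded as a subspace of $\mathcal H$. Then $\tilde{\mathcal Z}$ and $\mathcal Z$ are $2\delta$-close.
   Context: For a subspace $\mathcal Y\subseteq\mathcal H$, $P_{\mathcal Y}$ is the orthogonal projection onto $\mathcal Y$, and for an operator $X$ on $\mathcal H$, $X|_{\mathcal Y}=\Gamma X\Gamma^\dagger$ is its two-sided restriction, where $\Gamma:\mathcal H\to\mathcal Y$ is the projection onto $\mathcal Y$ and $\Gamma^\dagger$ the inclusion. $\mathcal Y$ is $\delta$-viable for $\mathcal Z$ if $\|P_{\mathcal Y}|z\rangle\|^2\ge1-\delta$ for every unit $|z\rangle\in\mathcal Z$; two subspaces are $\delta$-close if each is $\delta$-viable for the other. A $\Delta$-AGSP for $\mathcal Z$ is an operator $A=I_{\mathcal Z}\oplus A_{\mathcal Z^\perp}$ on $\mathcal H$ with $A_{\mathcal Z^\perp}$ an operator on $\mathcal Z^\perp$ of norm at most $\sqrt\Delta$. *)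

(* Defs.v *)
From HB Require Import structures.
From mathcomp Require Import all_boot all_order all_algebra.
Set Implicit Arguments.
Unset Strict Implicit.
Unset Printing Implicit Defensive.
Import Order.TTheory GRing.Theory Num.Theory.
Local Open Scope ring_scope.
Local Open Scope sesquilinear_scope.

(* Conventions (MathComp's spectral.v conventions):
   - H = C^n with C : numClosedFieldType (e.g. the complex numbers);
     vectors are row vectors 'rV[C]_n, inner product dotmx u v = u *m v^t*.
   - An operator X on H acts on the right: v |-> v *m X.  Its adjoint is X^t*
     (conjugate transpose); the composite "first X then Y" is X *m Y, so the
     operator A^dagger A is the matrix A *m A^t*.
   - A subspace is the row space of a matrix; membership is (v <= U)%MS.
   - P_Y is proj_ortho Y (orthogonal projection onto the row space of Y). *)

Section Defs.
Variable C : numClosedFieldType.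

Definition sqnorm n (v : 'rV[C]_n) : C := dotmx v v.

Definition orth_to n p (v : 'rV[C]_n) (Z : 'M[C]_(p, n)) : Prop :=
  forall z : 'rV[C]_n, (z <= Z)%MS -> dotmx z v = 0.

Definition viable n p q (delta : C) (Y : 'M[C]_(p, n)) (Z : 'M[C]_(q, n)) :
  Prop :=
  forall z : 'rV[C]_n, (z <= Z)%MS -> sqnorm z = 1 ->
    1 - delta <= sqnorm (z *m proj_ortho Y).

Definition close n p q (delta : C) (Y : 'M[C]_(p, n)) (Z : 'M[C]_(q, n)) :
  Prop := viable delta Y Z /\ viable delta Z Y.

(* A is a Delta-AGSP for Z: A = I_Z (+) A_{Z^perp}, with A_{Z^perp} an
   operator on Z^perp of operator norm <= sqrt Delta, i.e.
   ||A w||^2 <= Delta ||w||^2 for w in Z^perp. *)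
Definition AGSP n p (Delta : C) (Z : 'M[C]_(p, n)) (A : 'M[C]_n) : Prop :=
  (forall z : 'rV[C]_n, (z <= Z)%MS -> z *m A = z) /\
  (forall w : 'rV[C]_n, orth_to w Z ->
     orth_to (w *m A) Z /\ sqnorm (w *m A) <= Delta * sqnorm w).

(* Gamma^dagger : coordinates in an orthonormal basis of Y -> H.
   Rows of this matrix form an orthonormal basis of Y;
   Gamma is v |-> v *m (onb Y)^t*, Gamma^dagger is c |-> c *m onb Y. *)
Definition onb n p (Y : 'M[C]_(p, n)) : 'M[C]_(\rank Y, n) :=
  schmidt (row_base Y).

(* two-sided restriction X|_Y = Gamma X Gamma^dagger (right-action matrix) *)
Definition restr n p (X : 'M[C]_n) (Y : 'M[C]_(p, n)) : 'M[C]_(\rank Y) :=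
  onb Y *m X *m (onb Y)^t*.

Definition spec_proj k (a b : C) (K : 'M[C]_k) : 'M[C]_k :=
  invmx (spectralmx K) *m
  diag_mx (map_mx (fun x => ((a <= x) && (x <= b))%:R) (spectral_diag K)) *m
  spectralmx K.

Definition Ztilde n p (delta : C) (X : 'M[C]_n) (Y : 'M[C]_(p, n)) :
  'M[C]_(\rank Y, n) :=
  spec_proj 0 delta (restr X Y) *m onb Y.

End Defs.

(* Main.v *)
Require Import Defs.
From HB Require Import structures.
From mathcomp Require Import all_boot all_order all_algebra.
Import Order.TTheory GRing.Theory Num.Theory.
Local Open Scope ring_scope.
Local Open Scope sesquilinear_scope.
Set Implicit Arguments.
Unset Strict Implicit.

Section Aux.
Variable C : numClosedFieldType.

Lemma trmxC_mul m n p (A : 'M[C]_(m, n)) (B : 'M[C]_(n, p)) :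
  (A *m B)^t* = B^t* *m A^t*.
Proof. by rewrite trmx_mul map_mxM. Qed.

Lemma sqnormE n (v : 'rV[C]_n) : sqnorm v = (v *m v^t*) 0 0.
Proof. exact: dotmxE. Qed.

Lemma sqnorm_ge0 n (v : 'rV[C]_n) : 0 <= sqnorm v.
Proof. exact: dnorm_ge0. Qed.

Lemma sqnorm_eq0 n (v : 'rV[C]_n) : (sqnorm v == 0) = (v == 0).
Proof. exact: dnorm_eq0. Qed.

Lemma onb_unitary n p (Y : 'M[C]_(p, n)) : onb Y *m (onb Y)^t* = 1%:M.
Proof. by apply/unitarymxP; rewrite schmidt_unitarymx // rank_leq_col. Qed.

Lemma onb_eqmx n p (Y : 'M[C]_(p, n)) : (onb Y :=: Y)%MS.
Proof.
rewrite /onb; apply: eqmx_trans (eq_row_base Y).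
by apply: eqmx_schmidt_free; rewrite row_base_free.
Qed.

Lemma proj_ortho_onb n p (Y : 'M[C]_(p, n)) :
  proj_ortho Y = (onb Y)^t* *m onb Y.
Proof.
set B := onb Y; set X := B^t* *m B.
have key : forall w : 'rV[C]_n, w *m proj_ortho Y = w *m X.
  move=> w; rewrite -[w in LHS](subrK (w *m X)) mulmxDl.
  rewrite proj_ortho_0; last first.
    apply/orthomx1P.
    have /submxP [D ->] : (Y <= B)%MS by rewrite onb_eqmx.
    rewrite trmxC_mul mulmxA mulmxBl /X -!mulmxA onb_unitary mulmx1.
    by rewrite subrr mul0mx.
  rewrite add0r proj_ortho_id // /X mulmxA -(onb_eqmx Y).
  exact: submxMl.
apply/row_matrixP => i; rewrite -[proj_ortho Y]mul1mx -[X]mul1mx !row_mul.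
exact: key.
Qed.


Lemma dot_conj n (u w : 'rV[C]_n) : (w *m u^t*) 0 0 = ((u *m w^t*) 0 0)^*.
Proof.
have -> : w *m u^t* = (u *m w^t*)^t* by rewrite trmxC_mul trmxCK.
by rewrite !mxE.
Qed.

Lemma mxDE m n (A B : 'M[C]_(m, n)) i j : (A + B) i j = A i j + B i j.
Proof. by rewrite mxE. Qed.

Lemma sqnormD n (u w : 'rV[C]_n) : (u *m w^t*) 0 0 = 0 ->
  sqnorm (u + w) = sqnorm u + sqnorm w.
Proof.
move=> uw; rewrite !sqnormE.
have -> : (u + w)^t* = u^t* + w^t* by rewrite linearD /= map_mxD.
rewrite mulmxDl !mulmxDr !mxDE uw (dot_conj u w) uw conjC0 !addr0.
by rewrite add0r.
Qed.

Lemma ortho_dot n p (S : 'M[C]_(p, n)) (u w : 'rV[C]_n) :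
  (u <= S)%MS -> w *m S^t* = 0 -> (u *m w^t*) 0 0 = 0.
Proof.
move=> /submxP [c ->] wS.
have E : S *m w^t* = (w *m S^t*)^t* by rewrite trmxC_mul trmxCK.
by rewrite -mulmxA E wS linear0 /= map_mx0 mulmx0 mxE.
Qed.

Lemma proj_compl n p (S : 'M[C]_(p, n)) (v : 'rV[C]_n) :
  (v - v *m proj_ortho S) *m S^t* = 0.
Proof. by apply/orthomx1P; exact: proj_ortho_compl_sub. Qed.

Lemma pythag n p (S : 'M[C]_(p, n)) (v : 'rV[C]_n) :
  sqnorm v = sqnorm (v *m proj_ortho S) + sqnorm (v - v *m proj_ortho S).
Proof.
have h := sqnormD (ortho_dot (proj_ortho_sub S v) (proj_compl S v)).
by rewrite -h addrC subrK.
Qed.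

Lemma sqnorm_proj n p (S : 'M[C]_(p, n)) (z : 'rV[C]_n) :
  sqnorm (z *m proj_ortho S) = sqnorm (z *m (onb S)^t*).
Proof.
rewrite !sqnormE proj_ortho_onb !trmxC_mul trmxCK !mulmxA.
by rewrite -[z *m _ *m _ *m _ ]mulmxA onb_unitary mulmx1.
Qed.


Lemma mxBE m n (A B : 'M[C]_(m, n)) i j : (A - B) i j = A i j - B i j.
Proof. by rewrite !mxE. Qed.

Definition energy n (A : 'M[C]_n) (v : 'rV[C]_n) :=
  (v *m (1%:M - A *m A^t*) *m v^t*) 0 0.

Lemma energyE n (A : 'M[C]_n) v : energy A v = sqnorm v - sqnorm (v *m A).
Proof.
rewrite /energy mulmxBr mulmx1 mulmxBl mxBE !sqnormE trmxC_mul.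
by rewrite !mulmxA.
Qed.

Lemma half2 : 2^-1 + 2^-1 = 1 :> C.
Proof. by rewrite -mulr2n -(mulr_natl (2^-1 : C) 2) mulfV // pnatr_eq0. Qed.

Section AGSP.
Variables (n : nat) (Z A : 'M[C]_n) (Delta : C).
Hypothesis hA : AGSP Delta Z A.
Hypothesis hD : Delta <= 2^-1.

Lemma orth_compl (v : 'rV[C]_n) : orth_to (v - v *m proj_ortho Z) Z.
Proof. by move=> z zZ; rewrite dotmxE (ortho_dot zZ (proj_compl Z v)). Qed.

Lemma energy_w v (w := v - v *m proj_ortho Z) :
  energy A v = sqnorm w - sqnorm (w *m A).
Proof.
set u := v *m proj_ortho Z.
have uZ : (u <= Z)%MS by exact: proj_ortho_sub.
have hv : v = u + w by rewrite /w addrC subrK.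
have hvA : v *m A = u + w *m A by rewrite {1}hv mulmxDl hA.1.
have o : (u *m (w *m A)^t*) 0 0 = 0.
  by rewrite -dotmxE; apply: ((hA.2 w (orth_compl v)).1 u uZ).
rewrite energyE hvA sqnormD // (pythag Z v) -/u -/w.
by rewrite opprD addrACA subrr add0r.
Qed.

Lemma wA_bound (v : 'rV[C]_n) (w := v - v *m proj_ortho Z) :
  sqnorm (w *m A) <= Delta * sqnorm w.
Proof. exact: (hA.2 w (orth_compl v)).2. Qed.

Lemma energy_ub v : energy A v <= sqnorm (v - v *m proj_ortho Z).
Proof. by rewrite energy_w lerBlDr lerDl sqnorm_ge0. Qed.

Lemma energy_lb v : 2^-1 * sqnorm (v - v *m proj_ortho Z) <= energy A v.
Proof.
rewrite energy_w; set w := v - _.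
have := wA_bound v; rewrite -/w => h.
have h2 : sqnorm (w *m A) <= 2^-1 * sqnorm w.
  by apply: le_trans h _; rewrite ler_wpM2r // sqnorm_ge0.
rewrite lerBrDr; apply: le_trans (lerD (lexx _) h2) _.
by rewrite -mulrDl half2 mul1r.
Qed.

Lemma energy_ge0 v : 0 <= energy A v.
Proof.
apply: le_trans (energy_lb v).
by rewrite mulr_ge0 ?sqnorm_ge0 // invr_ge0 ler0n.
Qed.

End AGSP.

Lemma trmxCD m p (A B : 'M[C]_(m, p)) : (A + B)^t* = A^t* + B^t*.
Proof. by rewrite linearD /= map_mxD. Qed.

Lemma sqnorm0 n : sqnorm (0 : 'rV[C]_n) = 0.
Proof. by rewrite sqnormE mul0mx mxE. Qed.

Lemma viable_scaled n p q (delta : C) (Y : 'M[C]_(p, n)) (Z : 'M[C]_(q, n)) :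
  viable delta Y Z -> forall w, (w <= Z)%MS ->
  (1 - delta) * sqnorm w <= sqnorm (w *m proj_ortho Y).
Proof.
move=> hY w wZ.
have [->|w0] := eqVneq w 0; first by rewrite mul0mx !sqnorm0 mulr0.
set s := sqnorm w.
have s0 : 0 < s by rewrite /s /sqnorm dnorm_gt0.
set a := (sqrtC s)^-1.
have a2 : `|a| ^+ 2 = s^-1.
  by rewrite /a normfV ger0_norm ?sqrtC_ge0 ?ltW // exprVn sqrtCK.
have h := hY (a *: w) (scalemx_sub _ wZ).
rewrite /sqnorm dnormZ a2 mulVf ?gt_eqF // -scalemxAl dnormZ a2 in h.
by have := h erefl; rewrite ler_pdivlMl // mulrC.
Qed.

Lemma proj_back n p q (delta : C) (Y : 'M[C]_(p, n)) (Z : 'M[C]_(q, n)) :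
  viable delta Y Z -> delta < 1 -> forall w, (w <= Z)%MS ->
  (1 - delta) * sqnorm (w *m proj_ortho Y) <=
  sqnorm (w *m proj_ortho Y *m proj_ortho Z).
Proof.
move=> hY d1 w wZ; set y := w *m proj_ortho Y.
set y' := y *m proj_ortho Z.
have e1 : (y *m w^t*) 0 0 = sqnorm y.
  have o := ortho_dot (proj_ortho_sub Y w) (proj_compl Y w).
  rewrite -[w in LHS](subrK y) trmxCD mulmxDr mxDE -/y o add0r.
  by rewrite sqnormE.
have e2 : (y *m w^t*) 0 0 = (y' *m w^t*) 0 0.
  have o := ortho_dot wZ (proj_compl Z y).
  rewrite -[y in LHS](subrK y') mulmxDl mxDE -/y'.
  by rewrite (dot_conj w) o conjC0 add0r.
have cs : `|dotmx y' w| ^+ 2 <= sqnorm y' * sqnorm w :=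
  (CauchySchwarz (@dotmx C n) y' w).1.
rewrite dotmxE -e2 e1 ger0_norm ?sqnorm_ge0 // in cs.
have hv := viable_scaled hY wZ; rewrite -/y in hv.
have sy0 := sqnorm_ge0 y.
have d0 : 0 <= 1 - delta by rewrite subr_ge0 ltW.
have [sy|sy] := eqVneq (sqnorm y) 0.
  by rewrite sy mulr0 sqnorm_ge0.
have syp : 0 < sqnorm y by rewrite lt_def sy sy0.
rewrite -(ler_pM2r syp).
apply: le_trans (_ : (1 - delta) * (sqnorm y' * sqnorm w) <= _).
  by rewrite -mulrA ler_wpM2l // -expr2.
by rewrite mulrCA mulrC [X in _ <= X]mulrC ler_wpM2r ?sqnorm_ge0.
Qed.


Lemma quad_diag m (c g : 'rV[C]_m) :
  (c *m diag_mx g *m c^t*) 0 0 = \sum_i g 0 i * (c 0 i * (c 0 i)^*).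
Proof.
rewrite mul_mx_diag !mxE; apply: eq_bigr => i _; rewrite !mxE.
by rewrite [c 0 i * g 0 i]mulrC mulrA.
Qed.

Lemma unitaryK m (U : 'M[C]_m) : U \is unitarymx -> U^t* *m U = 1%:M.
Proof.
by move=> Uu; rewrite -invmx_unitary // mulVmx // unitarymx_unit.
Qed.

Lemma sqnorm_sum m (g : 'rV[C]_m) :
  sqnorm g = \sum_i (g 0 i * (g 0 i)^*).
Proof. by rewrite sqnormE mxE; apply: eq_bigr => i _; rewrite !mxE. Qed.

Lemma sqnorm_onb n p (S : 'M[C]_(p, n)) (x : 'rV[C]_(\rank S)) :
  sqnorm (x *m onb S) = sqnorm x.
Proof.
by rewrite !sqnormE trmxC_mul mulmxA -[x *m _ *m _]mulmxA onb_unitary mulmx1.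
Qed.

Lemma herm_lb k (S : 'M[C]_k) (a : C) : S^t* = S ->
  (forall j, a <= spectral_diag S 0 j) ->
  forall d : 'rV[C]_k, a * sqnorm d <= (d *m S *m d^t*) 0 0.
Proof.
move=> hS ha d.
have /orthomx_spectralP h : S \is normalmx by apply/normalmxP; rewrite hS.
have Vu := spectral_unitarymx S.
rewrite [in X in _ <= X]h invmx_unitary //.
set g := d *m (spectralmx S)^t*.
have -> : d *m ((spectralmx S)^t* *m diag_mx (spectral_diag S) *m spectralmx S)
   *m d^t* = g *m diag_mx (spectral_diag S) *m g^t*.
  by rewrite /g !trmxC_mul trmxCK !mulmxA.
have -> : sqnorm d = sqnorm g.
  by rewrite /g !sqnormE trmxC_mul trmxCK mulmxA -[d *m _ *m _]mulmxA
     unitaryK // mulmx1.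
rewrite quad_diag sqnorm_sum mulr_sumr; apply: ler_sum => j _.
by rewrite ler_wpM2r ?mul_conjC_ge0.
Qed.

Lemma sv_sym n q s (Zm : 'M[C]_(q, n)) (Q : 'M[C]_(s, n)) (a : C) :
  (forall v : 'rV[C]_n, (v <= Q)%MS -> a * sqnorm v <= sqnorm (v *m proj_ortho Zm)) ->
  (forall w : 'rV[C]_n, (w <= Zm)%MS -> w *m Q^t* = 0 -> w = 0) ->
  forall z : 'rV[C]_n, (z <= Zm)%MS -> a * sqnorm z <= sqnorm (z *m proj_ortho Q).
Proof.
move=> hQ hinj z zZ.
set Bz := onb Zm; set Bq := onb Q.
set M := Bq *m Bz^t*.
have F1 : forall c : 'rV[C]_(\rank Q), a * sqnorm c <= sqnorm (c *m M).
  move=> c; have := hQ (c *m Bq).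
  rewrite sqnorm_onb sqnorm_proj -/Bz mulmxA; apply.
  by rewrite -(onb_eqmx Q) submxMl.
have F2 : forall d : 'rV[C]_(\rank Zm), d *m M^t* = 0 -> d = 0.
  move=> d hd.
  have hz : (d *m Bz <= Zm)%MS by rewrite -(onb_eqmx Zm) submxMl.
  have z0 : d *m Bz = 0.
    apply: hinj hz _.
    have /submxP [X ->] : (Q <= Bq)%MS by rewrite onb_eqmx.
    rewrite trmxC_mul mulmxA -[d *m Bz *m _]mulmxA.
    by rewrite (_ : Bz *m Bq^t* = M^t*) ?hd ?mul0mx // /M trmxC_mul trmxCK.
  by rewrite -[d]mulmx1 -(onb_unitary Zm) mulmxA -/Bz z0 mul0mx.
set S := M^t* *m M.
have hS : S^t* = S by rewrite /S trmxC_mul trmxCK.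
have /orthomx_spectralP hSd : S \is normalmx by apply/normalmxP; rewrite hS.
have Vu := spectral_unitarymx S.
have eig : forall j, a <= spectral_diag S 0 j.
  move=> j.
  set V := spectralmx S; set mu := spectral_diag S.
  pose v := (delta_mx 0 j : 'rV[C]_(\rank Zm)) *m V.
  have vS : v *m S = mu 0 j *: v.
    rewrite /v -mulmxA {1}hSd invmx_unitary // !mulmxA -/V.
    rewrite -[delta_mx 0 j *m V *m V^t*]mulmxA (unitarymxP Vu) mulmx1.
    rewrite -/mu scalemxAl; congr (_ *m _); apply/rowP => i.
    rewrite mul_mx_diag !mxE /=; case: eqP => [->|_]; rewrite ?mulr1 ?mul1r ?mulr0 ?mul0r //.
  have v1 : sqnorm v = 1.
    rewrite sqnormE /v trmxC_mul mulmxA -[_ *m V *m _]mulmxA (unitarymxP Vu).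
    rewrite mulmx1 -sqnormE sqnorm_sum (bigD1 j) //= big1 ?addr0.
      by rewrite mxE !eqxx /= conjC1 mulr1.
    by move=> i ij; rewrite mxE eqxx /= (negPf ij) mul0r.
  set w := v *m M^t*.
  have wn : sqnorm w = mu 0 j.
    by rewrite sqnormE /w (trmxC_mul v) trmxCK mulmxA -[v *m M^t* *m M]mulmxA -/S vS -scalemxAl mxE -sqnormE v1 mulr1.
  have wM : w *m M = mu 0 j *: v by rewrite /w -mulmxA -/S vS.
  have hz : sqnorm (mu 0 j *: v) = `|mu 0 j| ^+ 2 * sqnorm v.
    by rewrite /sqnorm dnormZ.
  have := F1 w; rewrite wM hz v1 mulr1 wn.
  have mu0 : 0 <= mu 0 j by rewrite -wn sqnorm_ge0.
  have mun : mu 0 j != 0.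
    apply/eqP => m0; have /eqP := wn; rewrite m0 sqnorm_eq0 => /eqP /F2 v0.
    by move: v1; rewrite v0 sqnorm0 => /eqP; rewrite eq_sym oner_eq0.
  have mup : 0 < mu 0 j by rewrite lt_def mun mu0.
  by rewrite ger0_norm // expr2 ler_pM2r.
have zz : z *m Bz^t* *m Bz = z.
  by rewrite -mulmxA -proj_ortho_onb proj_ortho_id.
have := herm_lb hS eig (z *m Bz^t*).
rewrite -(sqnorm_onb (z *m Bz^t*)) -/Bz zz.
rewrite sqnorm_proj -/Bq; congr (_ <= _).
rewrite sqnormE /S (_ : z *m Bq^t* = z *m Bz^t* *m M^t*); last first.
  by rewrite /M trmxC_mul trmxCK !mulmxA zz.
by rewrite [(_ *m M^t*)^t*]trmxC_mul trmxCK !mulmxA.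
Qed.

Section Spec.
Variables (n p : nat) (Y : 'M[C]_(p, n)) (A : 'M[C]_n) (delta : C).
Local Notation W := (onb Y).
Local Notation r := (\rank Y).
Local Notation Ht := (1%:M - A *m A^t*).
Local Notation T := (restr Ht Y).
Local Notation U := (spectralmx T).
Local Notation d := (spectral_diag T).
Local Notation e := (map_mx (fun x => ((0 <= x) && (x <= delta))%:R) d).

Lemma Ht_herm : Ht^t* = Ht.
Proof.
by rewrite linearB /= map_mxB trmx1 map_mx1 trmxC_mul trmxCK.
Qed.

Lemma T_herm : T^t* = T.
Proof. by rewrite /restr !trmxC_mul trmxCK Ht_herm mulmxA. Qed.

Lemma U_unitary : U \is unitarymx.
Proof. exact: spectral_unitarymx. Qed.

Lemma UUt : U *m U^t* = 1%:M.
Proof. exact/unitarymxP/U_unitary. Qed.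

Lemma UtU : U^t* *m U = 1%:M.
Proof. exact/unitaryK/U_unitary. Qed.

Lemma T_decomp : T = U^t* *m diag_mx d *m U.
Proof.
have /orthomx_spectralP h : T \is normalmx by apply/normalmxP; rewrite T_herm.
by rewrite {1}h invmx_unitary // U_unitary.
Qed.

Lemma energy_coord (x : 'rV[C]_r) :
  energy A (x *m W) = (x *m T *m x^t*) 0 0.
Proof. by rewrite /energy /restr trmxC_mul !mulmxA. Qed.

Lemma sqnorm_coord (x : 'rV[C]_r) : sqnorm (x *m W) = sqnorm x.
Proof.
by rewrite !sqnormE trmxC_mul mulmxA -[x *m W *m _]mulmxA onb_unitary mulmx1.
Qed.

Lemma energy_diag (x : 'rV[C]_r) :
  energy A (x *m W) = ((x *m U^t*) *m diag_mx d *m (x *m U^t*)^t*) 0 0.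
Proof.
by rewrite energy_coord [in LHS]T_decomp trmxC_mul trmxCK !mulmxA.
Qed.

Lemma sqnorm_U (x : 'rV[C]_r) : sqnorm (x *m U^t*) = sqnorm x.
Proof.
by rewrite !sqnormE trmxC_mul trmxCK mulmxA -[x *m _ *m U]mulmxA UtU mulmx1.
Qed.

Hypothesis hE : forall v, 0 <= energy A v.

Lemma d_ge0 i : 0 <= d 0 i.
Proof.
have := hE ((delta_mx 0 i *m U) *m W).
rewrite energy_diag -[delta_mx 0 i *m U *m _]mulmxA UUt mulmx1 quad_diag.
rewrite (bigD1 i) //= big1 ?addr0; last first.
  by move=> j ji; rewrite !mxE eqxx /= (negPf ji) mul0r mulr0.
by rewrite /delta_mx !mxE !eqxx /= conjC1 !mulr1.
Qed.

Lemma Ztilde_energy v : (v <= Ztilde delta Ht Y)%MS ->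
  energy A v <= delta * sqnorm v.
Proof.
move=> /submxP [c ->]; rewrite /Ztilde /spec_proj invmx_unitary ?U_unitary //.
set g := c *m U^t* *m diag_mx e.
have hg : g *m U *m U^t* = g by rewrite -mulmxA UUt mulmx1.
rewrite (_ : c *m _ = (g *m U) *m W); last by rewrite /g !mulmxA.
rewrite energy_diag sqnorm_coord -(sqnorm_U (g *m U)) hg quad_diag sqnorm_sum.
rewrite mulr_sumr; apply: ler_sum => i _.
have gi : g 0 i = (c *m U^t*) 0 i * e 0 i by rewrite /g mul_mx_diag mxE.
have ei : e 0 i = ((0 <= d 0 i) && (d 0 i <= delta))%:R :> C by rewrite mxE.
rewrite gi ei.
case E : (_ && _); last first.
  by rewrite /= !mulr0 conjC0 !mulr0.
move/andP: E => [h0 h1].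
by rewrite mulr1 ler_wpM2r // mul_conjC_ge0.
Qed.

Lemma high_zero (hd : 0 < delta) (x : 'rV[C]_r) :
  x *m U^t* *m diag_mx e = 0 ->
  energy A (x *m W) <= delta * sqnorm (x *m W) -> x = 0.
Proof.
move=> hx hen.
set c := x *m U^t*.
have alt : forall i, c 0 i = 0 \/ delta < d 0 i.
  move=> i.
  have ei : e 0 i = ((0 <= d 0 i) && (d 0 i <= delta))%:R :> C by rewrite mxE.
  have := congr1 (fun M : 'rV[C]_r => M 0 i) hx; rewrite /= mul_mx_diag mxE -/c.
  rewrite ei d_ge0 /=; case E : (d 0 i <= delta).
    by rewrite /= mulr1 => ->; left; rewrite mxE.
  move=> _; right; rewrite real_ltNge ?E //; [exact: gtr0_real | exact: ger0_real (d_ge0 i)].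
rewrite energy_diag sqnorm_coord -(sqnorm_U x) -/c quad_diag sqnorm_sum in hen.
rewrite mulr_sumr -subr_le0 -sumrB in hen.
have tge0 : forall i, 0 <= d 0 i * (c 0 i * (c 0 i)^*) - delta * (c 0 i * (c 0 i)^*).
  move=> i; case: (alt i) => [->|hi]; first by rewrite conjC0 !mulr0 subrr.
  by rewrite -mulrBl mulr_ge0 ?mul_conjC_ge0 // subr_ge0 ltW.
have s0 : \sum_i (d 0 i * (c 0 i * (c 0 i)^*) - delta * (c 0 i * (c 0 i)^*)) = 0.
  by apply/le_anti; rewrite hen sumr_ge0.
have c0 : c = 0.
  apply/rowP => i; rewrite [X in _ = X]mxE.
  case: (alt i) => // hi.
  have := psumr_eq0P (fun j _ => tge0 j) s0 (i:=i) isT.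
  rewrite -mulrBl => /eqP; rewrite mulf_eq0 subr_eq0 mul_conjC_eq0.
  by rewrite gt_eqF //= => /eqP.
by rewrite -[x]mulmx1 -UtU mulmxA -/c c0 !mul0mx.
Qed.

Lemma diag_e_herm : (diag_mx e : 'M[C]_r)^t* = diag_mx e.
Proof.
apply/matrixP => i j; rewrite !mxE.
by rewrite eq_sym; case: eqP => [->|_]; case: (_ && _); rewrite /= ?mulr0n ?mulr1n ?conjC0 ?conjC1.
Qed.

Lemma Z_inj q (Z : 'M[C]_(q, n)) (hd : 0 < delta) (hd1 : delta < 1)
  (hY : viable delta Y Z) (hub : forall v, energy A v <= sqnorm (v - v *m proj_ortho Z))
  (w : 'rV[C]_n) : (w <= Z)%MS -> w *m (Ztilde delta Ht Y)^t* = 0 -> w = 0.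
Proof.
move=> wZ hw.
set y := w *m proj_ortho Y.
set x := w *m W^t*.
have yx : y = x *m W by rewrite /y proj_ortho_onb mulmxA.
have hen : energy A (x *m W) <= delta * sqnorm (x *m W).
  rewrite -yx; apply: le_trans (hub y) _.
  have := proj_back hY hd1 wZ; rewrite -/y.
  by rewrite (pythag Z y) mulrBl mul1r lerBlDr lerD2l.
have hx : x *m U^t* *m diag_mx e = 0.
  move: hw; rewrite /Ztilde /spec_proj invmx_unitary ?U_unitary //.
  rewrite !trmxC_mul trmxCK diag_e_herm !mulmxA -/x => h.
  by rewrite -[LHS]mulmx1 -UUt mulmxA h mul0mx.
have x0 := high_zero hd hx hen.
have := viable_scaled hY wZ; rewrite -/y yx x0 mul0mx sqnorm0.
rewrite pmulr_rle0 ?subr_gt0 // => h.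
by apply/eqP; rewrite -sqnorm_eq0 eq_le h sqnorm_ge0.
Qed.

End Spec.

End Aux.

Unset Implicit Arguments.
Set Strict Implicit.

Theorem lemma3p4 (C : numClosedFieldType) (n : nat)
  (Z : 'M[C]_n) (A : 'M[C]_n) (Delta : C)
  (hA : AGSP Delta Z A) (hDelta : Delta <= 2^-1)
  (delta : C) (hdelta : 0 < delta)
  (Y : 'M[C]_n) (hY : viable delta Y Z) :
  let Ht := 1%:M - A *m A^t* in
  close (2 * delta) (Ztilde delta Ht Y) Z.
Proof.
move=> Ht.
have dreal : delta \is Num.real by exact: gtr0_real.
have hreal : (2^-1 : C) \is Num.real by rewrite rpredV realn.
have [hbig|hsmall] := boolP (2^-1 <= delta).
  have h1 : 1 - 2 * delta <= 0.
    rewrite subr_le0 -(ler_pM2l (_ : (0 : C) < 2^-1)) ?invr_gt0 ?ltr0n //.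
    by rewrite mulrA mulVf ?pnatr_eq0 // mul1r mulr1.
  by split => v _ _; apply: le_trans h1 (sqnorm_ge0 _).
have hs : delta < 2^-1 by rewrite real_ltNge.
have hd1 : delta < 1.
  by apply: lt_trans hs _; rewrite invf_lt1 ?ltr0n // ltr1n.
have hE := energy_ge0 hA hDelta.
have hub := energy_ub hA.
have hb : forall v : 'rV[C]_n, (v <= Ztilde delta Ht Y)%MS ->
    (1 - 2 * delta) * sqnorm v <= sqnorm (v *m proj_ortho Z).
  move=> v hv.
  have e1 := Ztilde_energy hv.
  have e2 := energy_lb hA hDelta v.
  have e3 : sqnorm (v - v *m proj_ortho Z) <= 2 * delta * sqnorm v.
    rewrite -(ler_pM2l (_ : (0 : C) < 2^-1)) ?invr_gt0 ?ltr0n //.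
    rewrite !mulrA mulVf ?pnatr_eq0 // mul1r.
    exact: le_trans e2 e1.
  rewrite mulrBl mul1r lerBlDr {1}(pythag Z v) lerD2l.
  exact: e3.
split.
  move=> z zZ z1.
  have := sv_sym hb (Z_inj hE hdelta hd1 hY hub) zZ.
  by rewrite z1 mulr1.
move=> v hv v1.
by have := hb v hv; rewrite v1 mulr1.
Qed.
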